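(* Let $n\ge2$. Inside $\mathbb P(R_3)$, identified with the Plücker space of $\mathbb G(n-1,n+2)$ as in the context, the intersection $\mathrm{Split}_3(\mathbb P^n)\cap\mathbb G(n-1,n+2)$ contains the set $$\{\langle Z+2y_1+2y_2\rangle\cap\langle Z+2y_1+2y_3\rangle\cap\langle Z+2y_2+2y_3\rangle\ :\ Z\subset\Sigma\text{ a subscheme of length }n-2,\ y_1,y_2,y_3\in\Sigma\text{ pairwise distinct}\}.$$
   Context: $K$ is an algebraically closed field of characteristic $0$, $R=K[x_0,\dots,x_n]$, $R_3$ its degree-$3$ part, $\mathbb P(R_3)$ the projective space of cubic forms up to scalars; $\mathrm{Split}_3(\mathbb P^n)$ is the set of classes $[L_1L_2L_3]$ with $L_i\in R_1$. Let $z_0,\dots,z_{n+2}$ be coordinates on $\mathbb P^{n+2}$ and $\Sigma=\{[t_0^{n+2}:t_0^{n+1}t_1:\dots:t_1^{n+2}]\}$ the standard rational normal curve. $\mathbb G(n-1,n+2)$ is the Grassmannian of $(n-1)$-spaces of $\mathbb P^{n+2}$ with (dual) Plücker coordinates: if $\Lambda$ is cut out by independent equations $\sum_j u_{i,j}z_j=0$, $i=1,2,3$, its coordinates are the $3\times3$ minors $p_{i_1i_2i_3}=\det(u_{a,i_b})$. For $0\ne L=u_0x_0+\dots+u_nx_n$ let $\phi(L)$ be the $(n-1)$-space $u_0z_j+\dots+u_nz_{j+n}=0$, $j=0,1,2$; its Plücker coordinates form a basis of $K[u_0,\dots,u_n]_3$, giving a unique linear isomorphism $\mathbb P(R_3)\to\mathbb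 P^{\binom{n+3}{3}-1}$ with $[L^3]\mapsto$ Plücker point of $\phi(L)$; through it $\mathbb G(n-1,n+2)\subset\mathbb P(R_3)$. For a subscheme $W\subset\Sigma$, $\langle W\rangle$ is its linear span; $Z+2y_1+2y_2$ is the sum of divisors on $\Sigma\cong\mathbb P^1$. *)

(* Defs.v *)
From HB Require Import structures.
From mathcomp Require Import all_boot all_order all_algebra.
From mathcomp Require Import mpoly.
Set Implicit Arguments. Unset Strict Implicit. Unset Printing Implicit Defensive.
Import Order.TTheory GRing.Theory Num.Theory.
Local Open Scope ring_scope.

Section Defs.
Variable K : fieldType.

(* the two variables t0, t1 of binary forms on Sigma = P^1 *)
Definition t0 : 'I_2 := ord0.
Definition t1 : 'I_2 := ord_max.

Definition bdvd (f g : {mpoly K[2]}) : Prop := exists q : {mpoly K[2]}, g = q * f.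

(* pullback to P^1 of the hyperplane sum_j u_j z_j = 0 of P^{n+2}
   along t |-> [t0^{n+2} : t0^{n+1} t1 : ... : t1^{n+2}] *)
Definition pullback (n : nat) (u : 'rV[K]_(n.+3)) : {mpoly K[2]} :=
  \sum_(j < n.+3) u 0 j *: ('X_t0 ^+ (n.+2 - j) * 'X_t1 ^+ j).

(* linear span <W> of the subscheme W of Sigma defined by the binary form f:
   the intersection of all hyperplanes containing W (scheme-theoretically),
   as a set of vectors z in K^{n+3} *)
Definition in_span (n : nat) (f : {mpoly K[2]}) (z : 'cV[K]_(n.+3)) : Prop :=
  forall u : 'rV[K]_(n.+3), bdvd f (pullback u) -> u *m z = 0.

(* binary linear form vanishing at the point y = [y.1 : y.2] of P^1 *)
Definition ptform (y : K * K) : {mpoly K[2]} := y.2 *: 'X_t0 - y.1 *: 'X_t1.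

Definition pdistinct (y y' : K * K) : Prop := y.1 * y'.2 != y.2 * y'.1.

Definition linL (n : nat) (u : 'rV[K]_(n.+1)) : {mpoly K[n.+1]} :=
  \sum_(i < n.+1) u 0 i *: 'X_i.

(* equations of phi(L): u_0 z_j + ... + u_n z_{j+n} = 0, j = 0,1,2 *)
Definition phiMat (n : nat) (u : 'rV[K]_(n.+1)) : 'M[K]_(3, n.+3) :=
  \matrix_(j < 3, k < n.+3)
    (if (j <= k)%N && (k - j < n.+1)%N then u 0 (inord (k - j)) else 0).

(* Plücker coordinates, indexed by all triples (i1,i2,i3) (alternating) *)
Definition PlSpace (m : nat) := {ffun 'I_m * 'I_m * 'I_m -> K^o}.

Definition tsel (m : nat) (t : 'I_m * 'I_m * 'I_m) (b : 'I_3) : 'I_m :=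
  match val b with 0 => t.1.1 | 1 => t.1.2 | _ => t.2 end.

Definition minors (m : nat) (U : 'M[K]_(3, m)) : PlSpace m :=
  [ffun t => \det (colsub (tsel t) U)].

End Defs.

(* Main.v *)
Require Import Defs.
From HB Require Import structures.
From mathcomp Require Import all_boot all_order all_algebra.
From mathcomp Require Import mpoly.
From mathcomp Require Import ring zify.
Import GRing.Theory.
Local Open Scope ring_scope.

Section Aux.
Context {K : fieldType}.
Local Notation P2 := {mpoly K[2]}.

Lemma det3f (f : nat -> nat -> K) : \det (\matrix_(i < 3, j < 3) f i j) =
  f 0 0 * (f 1 1 * f 2 2 - f 1 2 * f 2 1)
  - f 0 1 * (f 1 0 * f 2 2 - f 1 2 * f 2 0)
  + f 0 2 * (f 1 0 * f 2 1 - f 1 1 * f 2 0).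
Proof.
rewrite (expand_det_row _ 0) !big_ord_recr big_ord0 /= /cofactor.
rewrite !(expand_det_row _ 0) !big_ord_recr big_ord0 /= /cofactor.
rewrite !big_ord0 !det_mx11 !mxE. unfold bump. simpl. ring.
Qed.
Definition D3 (h : nat -> nat -> K) : K :=
  h 0%N 0%N * (h 1%N 1%N * h 2%N 2%N - h 1%N 2%N * h 2%N 1%N)
  - h 0%N 1%N * (h 1%N 0%N * h 2%N 2%N - h 1%N 2%N * h 2%N 0%N)
  + h 0%N 2%N * (h 1%N 0%N * h 2%N 1%N - h 1%N 1%N * h 2%N 0%N).
Definition qc (ya yb : K * K) (k : nat) : K :=
  match k with 0 => ya.2 * yb.2 | 1 => - (ya.2 * yb.1 + ya.1 * yb.2)
  | 2 => ya.1 * yb.1 | _ => 0 end.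
Definition conv (f g : nat -> K) (k : nat) : K :=
  match k with 0 => f 0%N * g 0%N | 1 => f 0%N * g 1%N + f 1%N * g 0%N
  | 2 => f 0%N * g 2%N + f 1%N * g 1%N + f 2%N * g 0%N | 3 => f 1%N * g 2%N + f 2%N * g 1%N
  | 4 => f 2%N * g 2%N | _ => 0 end.
Definition Af (ya yb : K * K) (j k : nat) : K :=
  if (j <= k)%N then qc ya yb (k - j) else 0.
Definition Wf (y1 y2 y3 : K * K) (i k : nat) : K :=
  match i with 0 => conv (qc y1 y1) (qc y2 y2) k
  | 1 => conv (qc y1 y1) (qc y3 y3) k | _ => conv (qc y2 y2) (qc y3 y3) k end.
Definition dl (ya yb : K * K) := ya.1 * yb.2 - ya.2 * yb.1.
Definition comp (h : nat -> nat -> K) (a b c : nat) := fun i j => h i (match j with 0 => a | 1 => b | _ => c end).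
Definition Pf (y1 y2 y3 : K * K) := dl y1 y2 * dl y1 y3 * dl y2 y3.
Definition F1 (y1 y2 y3 : K * K) (j k : nat) : K := Pf y1 y2 y3 * Af y2 y3 j k.
Definition addf (f g : nat -> nat -> K) (j k : nat) : K := f j k + g j k.
Definition polar (y1 y2 y3 : K * K) (a b c : nat) : K :=
  D3 (comp (addf (addf (F1 y1 y2 y3) (Af y1 y3)) (Af y1 y2)) a b c)
  - D3 (comp (addf (F1 y1 y2 y3) (Af y1 y3)) a b c)
  - D3 (comp (addf (F1 y1 y2 y3) (Af y1 y2)) a b c)
  - D3 (comp (addf (Af y1 y3) (Af y1 y2)) a b c)
  + D3 (comp (F1 y1 y2 y3) a b c) + D3 (comp (Af y1 y3) a b c) + D3 (comp (Af y1 y2) a b c).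
Lemma perT (y1 y2 y3 : K * K) : polar y1 y2 y3 0%N 1%N 2%N = D3 (comp (Wf y1 y2 y3) 0%N 1%N 2%N).
Proof. rewrite /polar /D3 /comp /Wf /F1 /Pf /addf /Af /conv /qc /dl /=. ring. Qed.
Lemma perT_all (y1 y2 y3 : K * K) :
  (polar y1 y2 y3 0 1 3 = D3 (comp (Wf y1 y2 y3) 0 1 3) /\
      polar y1 y2 y3 0 1 4 = D3 (comp (Wf y1 y2 y3) 0 1 4) /\
      polar y1 y2 y3 0 2 3 = D3 (comp (Wf y1 y2 y3) 0 2 3) /\
      polar y1 y2 y3 0 2 4 = D3 (comp (Wf y1 y2 y3) 0 2 4) /\
      polar y1 y2 y3 0 3 4 = D3 (comp (Wf y1 y2 y3) 0 3 4) /\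
      polar y1 y2 y3 1 2 3 = D3 (comp (Wf y1 y2 y3) 1 2 3) /\
      polar y1 y2 y3 1 2 4 = D3 (comp (Wf y1 y2 y3) 1 2 4) /\
      polar y1 y2 y3 1 3 4 = D3 (comp (Wf y1 y2 y3) 1 3 4) /\
      polar y1 y2 y3 2 3 4 = D3 (comp (Wf y1 y2 y3) 2 3 4))%N.
Proof. rewrite /polar /D3 /comp /Wf /F1 /Pf /addf /Af /conv /qc /dl /=. repeat split; ring. Qed.
Definition s5 (f g : nat -> nat -> K) (i j : nat) : K := f i 0%N * g 0%N j + f i 1%N * g 1%N j + f i 2%N * g 2%N j + f i 3%N * g 3%N j + f i 4%N * g 4%N j.
Definition rcomp (h : nat -> nat -> K) (a b c : nat) := fun i j => h (match i with 0 => a | 1 => b | _ => c end) j.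
Definition CBsum (f g : nat -> nat -> K) : K :=
  (D3 (comp f 0%N 1%N 2%N) * D3 (rcomp g 0%N 1%N 2%N) + D3 (comp f 0%N 1%N 3%N) * D3 (rcomp g 0%N 1%N 3%N)
 + D3 (comp f 0%N 1%N 4%N) * D3 (rcomp g 0%N 1%N 4%N) + D3 (comp f 0%N 2%N 3%N) * D3 (rcomp g 0%N 2%N 3%N)
 + D3 (comp f 0%N 2%N 4%N) * D3 (rcomp g 0%N 2%N 4%N) + D3 (comp f 0%N 3%N 4%N) * D3 (rcomp g 0%N 3%N 4%N)
 + D3 (comp f 1%N 2%N 3%N) * D3 (rcomp g 1%N 2%N 3%N) + D3 (comp f 1%N 2%N 4%N) * D3 (rcomp g 1%N 2%N 4%N)
 + D3 (comp f 1%N 3%N 4%N) * D3 (rcomp g 1%N 3%N 4%N) + D3 (comp f 2%N 3%N 4%N) * D3 (rcomp g 2%N 3%N 4%N)).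
Lemma CBn (f g : nat -> nat -> K) : D3 (s5 f g) = CBsum f g.
Proof. rewrite /CBsum /D3 /s5 /comp /rcomp /=. ring. Qed.

Lemma Gpol (y1 y2 y3 : K * K) (g : nat -> nat -> K) :
  D3 (s5 (addf (addf (F1 y1 y2 y3) (Af y1 y3)) (Af y1 y2)) g)
  - D3 (s5 (addf (F1 y1 y2 y3) (Af y1 y3)) g)
  - D3 (s5 (addf (F1 y1 y2 y3) (Af y1 y2)) g)
  - D3 (s5 (addf (Af y1 y3) (Af y1 y2)) g)
  + D3 (s5 (F1 y1 y2 y3) g) + D3 (s5 (Af y1 y3) g) + D3 (s5 (Af y1 y2) g)
  = D3 (s5 (Wf y1 y2 y3) g).
Proof.
rewrite !CBn /CBsum.
have := perT_all y1 y2 y3; have := perT y1 y2 y3; rewrite /polar.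
move=> e0 [e1 [e2 [e3 [e4 [e5 [e6 [e7 [e8 e9]]]]]]]].
rewrite -e0 -e1 -e2 -e3 -e4 -e5 -e6 -e7 -e8 -e9; ring.
Qed.

Definition mono (d i : nat) : 'X_{1..2} :=
  [multinom (if j == t0 then (d - i)%N else i) | j < 2].

Lemma mono0 d i : mono d i t0 = (d - i)%N.
Proof. by rewrite mnmE eqxx. Qed.
Lemma mono1 d i : mono d i t1 = i.
Proof. by rewrite mnmE. Qed.

Lemma ord2P (j : 'I_2) : j = t0 \/ j = t1.
Proof. case: j => [[|[|//]]] h; [left|right]; exact/val_inj. Qed.

Lemma mnm2P (m m' : 'X_{1..2}) : m t0 = m' t0 -> m t1 = m' t1 -> m = m'.
Proof. by move=> h0 h1; apply/mnmP => j; case: (ord2P j) => ->. Qed.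

Lemma mdeg2 (m : 'X_{1..2}) : mdeg m = (m t0 + m t1)%N.
Proof.
rewrite mdegE !big_ord_recl big_ord0 addn0; congr (_ + m _)%N; exact/val_inj.
Qed.

Lemma mono_eq d i j : (mono d i == mono d j) = (i == j).
Proof.
apply/eqP/eqP => [h|->] //; by have := congr1 (fun m : 'X_{1..2} => m t1) h; rewrite !mono1.
Qed.

Lemma mdeg_mono d i : (i <= d)%N -> mdeg (mono d i) = d.
Proof. by move=> h; rewrite mdeg2 mono0 mono1 subnK. Qed.

Lemma mono_of d m : mdeg m = d -> m = mono d (m t1) /\ (m t1 <= d)%N.
Proof.
rewrite mdeg2 => h; split; last by rewrite -h leq_addl.
by apply: mnm2P; rewrite ?mono0 ?mono1 // -h addnK.
Qed.

Lemma monoD d e i j : (i <= d)%N -> (j <= e)%N ->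
  (mono d i + mono e j)%MM = mono (d + e) (i + j).
Proof.
move=> hi hj; apply: mnm2P; rewrite mnmDE ?mono0 ?mono1 //; lia.
Qed.

Lemma X_mono d i : 'X_[mono d i] = 'X_t0 ^+ (d - i) * 'X_t1 ^+ i :> P2.
Proof.
rewrite !mpolyXn -mpolyXD; congr mpolyX.
by apply: mnm2P; rewrite mnmDE !mulmnE !mnm1E ?mono0 ?mono1 /=; lia.
Qed.

Lemma homog_expand d (W : P2) : W \is d.-homog ->
  W = \sum_(i < d.+1) W@_(mono d i) *: 'X_[mono d i].
Proof.
move=> hW; apply/mpolyP => m; rewrite raddf_sum /=.
have E : forall i : 'I_d.+1, (W@_(mono d i) *: 'X_[mono d i])@_m =
   W@_(mono d i) * (mono d i == m)%:R by move=> i; rewrite mcoeffZ mcoeffX.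
rewrite (eq_bigr _ (fun i _ => E i)).
case: (boolP (mdeg m == d)) => [/eqP hm | hm].
  have [em le] := mono_of _ _ hm.
  rewrite (bigD1 (Ordinal (le : (m t1 < d.+1)%N))) //= -em eqxx mulr1 big1 ?addr0 //.
  move=> i ne; rewrite em mono_eq.
  case: eqP => [h|]; last by rewrite mulr0.
  by move: ne; rewrite -(inj_eq val_inj) /= h eqxx.
rewrite (dhomog_nemf_coeff hW hm) big1 // => i _.
case: eqP => [h|]; last by rewrite mulr0.
by move: hm; rewrite -h mdeg_mono ?eqxx // -ltnS.
Qed.

Lemma mcoeff_sum_mono D d (c : nat -> K) (f : nat -> nat) k :
  (\sum_(i < d.+1) c i *: 'X_[mono D (f i)])@_(mono D k) =
  \sum_(i < d.+1) c i * (f i == k)%:R.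
Proof.
rewrite raddf_sum /=; apply: eq_bigr => i _.
by rewrite mcoeffZ mcoeffX mono_eq.
Qed.

Lemma shiftX d e a k (g : P2) : g \is d.-homog -> (a <= e)%N ->
  (g * 'X_[mono e a])@_(mono (d + e) k) =
  if ((a <= k) && (k - a <= d))%N then g@_(mono d (k - a)) else 0.
Proof.
move=> hg ha; rewrite {1}(homog_expand _ _ hg) mulr_suml.
have E : forall i : 'I_d.+1, g@_(mono d i) *: 'X_[mono d i] * 'X_[mono e a] =
   g@_(mono d i) *: 'X_[mono (d + e) (i + a)].
  by move=> i; rewrite -scalerAl -mpolyXD monoD // -ltnS.
rewrite (eq_bigr _ (fun i _ => E i)).
rewrite (mcoeff_sum_mono _ _ (fun i => g@_(mono d i)) (fun i => i + a)%N).
case: ifP => [/andP[hak hkd] | h].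
  rewrite (bigD1 (Ordinal (hkd : (k - a < d.+1)%N))) //= subnK // eqxx mulr1.
  rewrite big1 ?addr0 // => i ne; case: eqP => [hi|]; last by rewrite mulr0.
  by move: ne; rewrite -(inj_eq val_inj) /= -hi addnK eqxx.
rewrite big1 // => i _; case: eqP => [hi|]; last by rewrite mulr0.
by move: h; rewrite -hi leq_addl addnK -ltnS ltn_ord.
Qed.


Lemma pullbackE n (u : 'rV[K]_(n.+3)) :
  pullback u = \sum_(j < n.+3) u 0 j *: 'X_[mono n.+2 j].
Proof. by apply: eq_bigr => j _; rewrite X_mono. Qed.

Lemma pull_coef n (u : 'rV[K]_(n.+3)) (k : 'I_n.+3) :
  (pullback u)@_(mono n.+2 k) = u 0 k.
Proof.
rewrite pullbackE (eq_bigr (fun j : 'I_n.+3 => u 0 (inord j) *: 'X_[mono n.+2 j])); last first.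
  by move=> j _; rewrite inord_val.
rewrite (mcoeff_sum_mono _ _ (fun j => u 0 (inord j)) (fun j => j)).
rewrite (bigD1 k) //= eqxx mulr1 inord_val big1 ?addr0 // => i ne.
by move: ne; rewrite -(inj_eq val_inj) => /negbTE ->; rewrite mulr0.
Qed.

Lemma pull_homog n (u : 'rV[K]_(n.+3)) : pullback u \is (n.+2).-homog.
Proof.
rewrite pullbackE; apply: rpred_sum => j _; apply: rpredZ.
by rewrite dhomogX; apply/eqP/mdeg_mono; rewrite -ltnS.
Qed.

Lemma msize_homog d (p : P2) : p != 0 -> p \is d.-homog -> msize p = d.+1.
Proof.
move=> nz hp; have := dhomog_uniq nz (dhomog_msize hp) hp.
have : msize p != 0%N by rewrite msize_poly_eq0.
by case: (msize p) => [|s] //= _ ->.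
Qed.

Definition cfr d (W : P2) : 'rV[K]_(d.+1) := \row_(j < d.+1) W@_(mono d j).

Lemma pull_cfr n (W : P2) : W \is (n.+2).-homog -> pullback (cfr n.+2 W) = W.
Proof.
move=> hW; rewrite pullbackE {2}(homog_expand _ _ hW).
by apply: eq_bigr => j _; rewrite mxE.
Qed.

Lemma in_span_iff n (W : P2) (z : 'cV[K]_(n.+3)) : W != 0 -> W \is (n.+2).-homog ->
  in_span W z <-> cfr n.+2 W *m z = 0.
Proof.
move=> nzW hW; split.
  by move=> H; apply: H; exists 1; rewrite mul1r pull_cfr.
move=> Hz u [q Hq].
have [q0|nzq] := eqVneq q 0.
  have -> : u = 0 by apply/rowP => k; rewrite -pull_coef Hq q0 mul0r mcoeff0 mxE.
  by rewrite mul0mx.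
have nzp : pullback u != 0 by rewrite Hq mulf_neq0.
have := msizeM nzq nzW; rewrite -Hq (msize_homog _ _ nzp (pull_homog _ u)) (msize_homog _ _ nzW hW).
move=> hs; have hq1 : (msize q <= 1)%N by move: hs; case: (msize q) => [|[|s]] //=; lia.
have eq := msize1_polyC hq1.
have -> : u = q@_0 *: cfr n.+2 W.
  by apply/rowP => k; rewrite -pull_coef Hq {1}eq mul_mpolyC mcoeffZ !mxE.
by rewrite -scalemxAl Hz scaler0.
Qed.

Lemma meval_pt (x : 'I_2 -> K) (y : K * K) : (ptform y).@[x] = y.2 * x t0 - y.1 * x t1.
Proof. by rewrite /ptform mevalB !mevalZ !mevalXU. Qed.

Lemma pt_homog (y : K * K) : ptform y \is 1.-homog.
Proof. by rewrite /ptform rpredB // rpredZ // dhomogX; apply/eqP/mdeg1. Qed.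

Lemma pt_neq0 (y y' : K * K) : pdistinct y y' -> ptform y != 0.
Proof.
move=> h; apply/negP => /eqP h0.
have e0 := congr1 (meval (fun i => if i == t0 then 1 else 0)) h0.
have e1 := congr1 (meval (fun i => if i == t0 then 0 else 1)) h0.
rewrite meval_pt /= raddf0 mulr1 mulr0 subr0 in e0.
rewrite meval_pt /= raddf0 mulr1 mulr0 sub0r in e1.
move: h; rewrite /pdistinct e0; move/eqP: e1; rewrite oppr_eq0 => /eqP ->.
by rewrite !mul0r eqxx.
Qed.
Definition quart (a : nat -> K) : P2 :=
  a 0%N *: 'X_[mono 4 0] + a 1%N *: 'X_[mono 4 1] + a 2%N *: 'X_[mono 4 2]
  + a 3%N *: 'X_[mono 4 3] + a 4%N *: 'X_[mono 4 4].

Lemma Pq1 (ya yb : K * K) (j : nat) : (j < 3)%N ->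
  ptform ya * ptform yb * 'X_[mono 2 j] = quart (Af ya yb j).
Proof.
case: j => [|[|[|//]]] _; rewrite /quart /Af /qc !X_mono /ptform /= -!mul_mpolyC; ring.
Qed.

Lemma Pq2 (ya yb : K * K) :
  ptform ya ^+ 2 * ptform yb ^+ 2 = quart (conv (qc ya ya) (qc yb yb)).
Proof.
rewrite /quart /conv /qc !X_mono /ptform /= -!mul_mpolyC; ring.
Qed.

End Aux.

Section Aux2.
Context {K : fieldType}.
Local Notation P2 := {mpoly K[2]}.

Lemma det3n (M : 'M[K]_3) : \det M = D3 (fun i j => M (inord i) (inord j)).
Proof.
rewrite {1}(_ : M = \matrix_(i < 3, j < 3) M (inord i) (inord j)).
  exact: det3f.
by apply/matrixP=> i j; rewrite mxE !inord_val.
Qed.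

Lemma D3_ext (h h' : nat -> nat -> K) :
  (forall i j, (i < 3)%N -> (j < 3)%N -> h i j = h' i j) -> D3 h = D3 h'.
Proof. by move=> H; rewrite /D3 !H. Qed.

Lemma minors_s5 m (M : 'M[K]_(3, m)) (f G : nat -> nat -> K) t :
  (forall (j : 'I_3) (c : 'I_m), M j c = s5 f G j c) ->
  minors M t = D3 (s5 f (fun k j => G k (tsel t (inord j)))).
Proof.
move=> H; rewrite ffunE det3n; apply: D3_ext => i j hi hj.
by rewrite mxE H /s5 inordK.
Qed.

Lemma sum3 (V : nmodType) (F : 'I_3 -> V) :
  \sum_(i < 3) F i = F (inord 0) + F (inord 1) + F (inord 2).
Proof.
rewrite !big_ord_recl big_ord0 addr0 !addrA.
by congr (F _ + F _ + F _); apply/val_inj; rewrite /= inordK.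
Qed.

Definition Mf (Z : P2) (N k c : nat) : K := (Z * 'X_[mono 4 k])@_(mono N c).

Lemma Qco (Z : P2) N (a : nat -> K) c : (Z * quart a)@_(mono N c) =
  a 0%N * Mf Z N 0 c + a 1%N * Mf Z N 1 c + a 2%N * Mf Z N 2 c
  + a 3%N * Mf Z N 3 c + a 4%N * Mf Z N 4 c.
Proof. by rewrite /quart !mulrDr !mcoeffD -!scalerAr !mcoeffZ. Qed.

Lemma phiD n (u v : 'rV[K]_(n.+1)) j c : phiMat (u + v) j c = phiMat u j c + phiMat v j c.
Proof. by rewrite !mxE; case: ifP => _; rewrite ?addr0 // mxE. Qed.

Lemma phiZ n a (u : 'rV[K]_(n.+1)) j c : phiMat (a *: u) j c = a * phiMat u j c.
Proof. by rewrite !mxE; case: ifP => _; rewrite ?mulr0 // mxE. Qed.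

Lemma s5_addf (f g G : nat -> nat -> K) i j : s5 (addf f g) G i j = s5 f G i j + s5 g G i j.
Proof. rewrite /s5 /addf; ring. Qed.

Lemma s5_F1 y1 y2 y3 (G : nat -> nat -> K) i j :
  s5 (F1 y1 y2 y3) G i j = Pf y1 y2 y3 * s5 (Af y2 y3) G i j.
Proof. rewrite /s5 /F1; ring. Qed.

Lemma linLD n (u v : 'rV[K]_(n.+1)) : linL (u + v) = linL u + linL v.
Proof. by rewrite /linL -big_split; apply: eq_bigr => i _; rewrite mxE scalerDl. Qed.

Lemma phi_cf n (Z : P2) (ya yb : K * K) : Z \is (n - 2)%N.-homog -> (2 <= n)%N ->
  forall (j : 'I_3) (c : 'I_n.+3),
  phiMat (cfr n (Z * (ptform ya * ptform yb))) j c = s5 (Af ya yb) (Mf Z n.+2) j c.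
Proof.
move=> hZ hn j c.
have hg : Z * (ptform ya * ptform yb) \is n.-homog.
  have -> : n = ((n - 2) + (1 + 1))%N by lia.
  by apply: dhomogM => //; apply: dhomogM; apply: pt_homog.
rewrite /s5 -(Qco Z n.+2 (Af ya yb j)) -Pq1 // [Z * (_ * _ * _)]mulrA.
have := shiftX _ _ j c _ hg (_ : (j <= 2)%N); rewrite addn2 => ->; last by rewrite -ltnS.
rewrite mxE ltnS; case: ifP => // /andP[_ h].
by rewrite mxE inordK // ltnS.
Qed.

End Aux2.

Section Aux3.
Context {K : fieldType}.
Local Notation P2 := {mpoly K[2]}.

Definition Umat n (Z : P2) (y1 y2 y3 : K * K) : 'M[K]_(3, n.+3) :=
  \matrix_(i < 3, c < n.+3) s5 (Wf y1 y2 y3) (Mf Z n.+2) i c.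

Definition wsel (y1 y2 y3 : K * K) (i : nat) : P2 :=
  match i with
  | 0 => ptform y1 ^+ 2 * ptform y2 ^+ 2
  | 1 => ptform y1 ^+ 2 * ptform y3 ^+ 2
  | _ => ptform y2 ^+ 2 * ptform y3 ^+ 2 end.

Lemma Urow n (Z : P2) y1 y2 y3 (i : 'I_3) (c : 'I_n.+3) :
  Umat n Z y1 y2 y3 i c = (Z * wsel y1 y2 y3 i)@_(mono n.+2 c).
Proof.
rewrite mxE /s5 -(Qco Z n.+2 (Wf y1 y2 y3 i)); congr (mcoeff _ (Z * _)).
by case: i => [[|[|[|//]]] _] /=; rewrite Pq2.
Qed.

Lemma wsel_homog y1 y2 y3 (i : nat) : wsel y1 y2 y3 i \is 4.-homog.
Proof.
by case: i => [|[|i]] /=; apply: (dhomogM (dhomogMn 2 (pt_homog _)) (dhomogMn 2 (pt_homog _))).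
Qed.

Lemma pdistinct_sym (a b : K * K) : pdistinct a b -> pdistinct b a.
Proof. by rewrite /pdistinct [b.1 * _]mulrC [b.2 * _]mulrC eq_sym. Qed.

Lemma nzE1 (a b : K * K) : pdistinct a b -> b.2 * a.1 - b.1 * a.2 != 0.
Proof. by rewrite /pdistinct subr_eq0 [b.2 * _]mulrC [b.1 * _]mulrC. Qed.

Lemma nzE2 (a b : K * K) : pdistinct a b -> a.2 * b.1 - a.1 * b.2 != 0.
Proof. by rewrite /pdistinct subr_eq0 eq_sym. Qed.

Definition pt (a : K * K) : 'I_2 -> K := fun j => if j == t0 then a.1 else a.2.

Lemma ev_pt (a b : K * K) : (ptform b).@[pt a] = b.2 * a.1 - b.1 * a.2.
Proof. by rewrite meval_pt /pt /=. Qed.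

Lemma indep (y1 y2 y3 : K * K) : pdistinct y1 y2 -> pdistinct y1 y3 -> pdistinct y2 y3 ->
  forall v : 'I_3 -> K, \sum_(i < 3) v i *: wsel y1 y2 y3 i = 0 -> forall i, v i = 0.
Proof.
move=> h12 h13 h23 v; rewrite sum3 => H.
have ev a := congr1 (meval (pt a)) H.
have e1 := ev y1; have e2 := ev y2; have e3 := ev y3.
rewrite !inordK // /= !mevalD !mevalZ !mevalM !ev_pt raddf0 in e1.
rewrite !inordK // /= !mevalD !mevalZ !mevalM !ev_pt raddf0 in e2.
rewrite !inordK // /= !mevalD !mevalZ !mevalM !ev_pt raddf0 in e3.
have x2 : v (inord 2) * ((y2.2 * y1.1 - y2.1 * y1.2) ^+ 2 * (y3.2 * y1.1 - y3.1 * y1.2) ^+ 2) = 0.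
  by rewrite -e1; ring.
have x1 : v (inord 1) * ((y1.2 * y2.1 - y1.1 * y2.2) ^+ 2 * (y3.2 * y2.1 - y3.1 * y2.2) ^+ 2) = 0.
  by rewrite -e2; ring.
have x0 : v (inord 0) * ((y1.2 * y3.1 - y1.1 * y3.2) ^+ 2 * (y2.2 * y3.1 - y2.1 * y3.2) ^+ 2) = 0.
  by rewrite -e3; ring.
have zl (a b : K) : a * b = 0 -> b != 0 -> a = 0.
  by move=> h nb; move/eqP: h; rewrite mulf_eq0 (negbTE nb) orbF => /eqP.
have a1 := nzE1 _ _ h12; have a2 := nzE1 _ _ h13; have a3 := nzE1 _ _ h23.
have b1 := nzE2 _ _ h12; have b2 := nzE2 _ _ h13; have b3 := nzE2 _ _ h23.
move/zl: x0; rewrite mulf_neq0 ?expf_neq0 // => /(_ isT) x0.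
move/zl: x1; rewrite mulf_neq0 ?expf_neq0 // => /(_ isT) x1.
move/zl: x2; rewrite mulf_neq0 ?expf_neq0 // => /(_ isT) x2 i.
have -> : i = inord (val i) by rewrite inord_val.
by case: i => [[|[|[|//]]] ?].
Qed.

Lemma ffD m (f g : PlSpace K m) t : (f + g) t = f t + g t.
Proof. by rewrite ffunE. Qed.
Lemma ffB m (f g : PlSpace K m) t : (f - g) t = f t - g t.
Proof. by rewrite !ffunE. Qed.

End Aux3.

Section Aux4.
Context {K : fieldType}.
Lemma polar_psi n m (psi : {linear {mpoly K[n.+1]} -> PlSpace K m}) (u1 u2 u3 : 'rV[K]_(n.+1)) :
  psi (linL u1 * linL u2 * linL u3) *+ 6 =
  psi (linL (u1 + u2 + u3) ^+ 3) - psi (linL (u1 + u2) ^+ 3)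
  - psi (linL (u1 + u3) ^+ 3) - psi (linL (u2 + u3) ^+ 3)
  + psi (linL u1 ^+ 3) + psi (linL u2 ^+ 3) + psi (linL u3 ^+ 3).
Proof.
have polid : linL u1 * linL u2 * linL u3 *+ 6 =
    (linL u1 + linL u2 + linL u3) ^+ 3 - (linL u1 + linL u2) ^+ 3
    - (linL u1 + linL u3) ^+ 3 - (linL u2 + linL u3) ^+ 3
    + linL u1 ^+ 3 + linL u2 ^+ 3 + linL u3 ^+ 3 by ring.
by rewrite -raddfMn polid -!linLD !raddfD !raddfN.
Qed.
Lemma polar_psi2 n (psi : {linear {mpoly K[n.+1]} -> PlSpace K n.+3})
  (hpsi : forall u : 'rV[K]_(n.+1), psi (linL u ^+ 3) = minors (phiMat u))
  (u1 u2 u3 : 'rV[K]_(n.+1)) :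
  psi (linL u1 * linL u2 * linL u3) *+ 6 =
  minors (phiMat (u1 + u2 + u3)) - minors (phiMat (u1 + u2))
  - minors (phiMat (u1 + u3)) - minors (phiMat (u2 + u3))
  + minors (phiMat u1) + minors (phiMat u2) + minors (phiMat u3).
Proof. by rewrite polar_psi !hpsi. Qed.
Lemma final_id n (Z : {mpoly K[2]}) (y1 y2 y3 : K * K) :
  Z \is (n - 2)%N.-homog -> (2 <= n)%N ->
  let u1 := Pf y1 y2 y3 *: cfr n (Z * (ptform y2 * ptform y3)) in
  let u2 := cfr n (Z * (ptform y1 * ptform y3)) in
  let u3 := cfr n (Z * (ptform y1 * ptform y2)) in
  minors (phiMat (u1 + u2 + u3)) - minors (phiMat (u1 + u2))
  - minors (phiMat (u1 + u3)) - minors (phiMat (u2 + u3))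
  + minors (phiMat u1) + minors (phiMat u2) + minors (phiMat u3)
  = minors (Umat n Z y1 y2 y3).
Proof.
move=> hZ hn u1 u2 u3.
set U := Umat n Z y1 y2 y3.
  have p1 : forall j c, phiMat u1 j c = s5 (F1 y1 y2 y3) (Mf Z n.+2) j c.
    by move=> j c; rewrite phiZ phi_cf // s5_F1.
  have p2 : forall j c, phiMat u2 j c = s5 (Af y1 y3) (Mf Z n.+2) j c.
    by move=> j c; rewrite phi_cf.
  have p3 : forall j c, phiMat u3 j c = s5 (Af y1 y2) (Mf Z n.+2) j c.
    by move=> j c; rewrite phi_cf.
  have p12 : forall j c, phiMat (u1 + u2) j c =
      s5 (addf (F1 y1 y2 y3) (Af y1 y3)) (Mf Z n.+2) j c.
    by move=> j c; rewrite phiD p1 p2 s5_addf.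
  have p13 : forall j c, phiMat (u1 + u3) j c =
      s5 (addf (F1 y1 y2 y3) (Af y1 y2)) (Mf Z n.+2) j c.
    by move=> j c; rewrite phiD p1 p3 s5_addf.
  have p23 : forall j c, phiMat (u2 + u3) j c =
      s5 (addf (Af y1 y3) (Af y1 y2)) (Mf Z n.+2) j c.
    by move=> j c; rewrite phiD p2 p3 s5_addf.
  have p123 : forall j c, phiMat (u1 + u2 + u3) j c =
      s5 (addf (addf (F1 y1 y2 y3) (Af y1 y3)) (Af y1 y2)) (Mf Z n.+2) j c.
    by move=> j c; rewrite phiD p12 p3 [RHS]s5_addf.
  have pU : forall (j : 'I_3) (c : 'I_n.+3), U j c = s5 (Wf y1 y2 y3) (Mf Z n.+2) j c.
    by move=> j c; rewrite /U mxE.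
  have ffN (f : PlSpace K n.+3) t : (- f) t = - f t by rewrite ffunE.
  apply/ffunP => t; rewrite !ffD !ffN.
  rewrite (minors_s5 _ _ _ _ _ p123) (minors_s5 _ _ _ _ _ p12) (minors_s5 _ _ _ _ _ p13).
  rewrite (minors_s5 _ _ _ _ _ p23) (minors_s5 _ _ _ _ _ p1) (minors_s5 _ _ _ _ _ p2).
  rewrite (minors_s5 _ _ _ _ _ p3) (minors_s5 _ _ _ _ _ pU).
  exact: Gpol.
Qed.
End Aux4.

Theorem proposition2p10
  (K : closedFieldType) (hK : [pchar K] =i pred0) (n : nat) (hn : (2 <= n)%N)
  (psi : {linear {mpoly K[n.+1]} -> PlSpace K n.+3})
  (hpsi : forall u : 'rV[K]_(n.+1), psi (linL u ^+ 3) = minors (phiMat u))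
  (Z : {mpoly K[2]}) (hZ0 : Z != 0) (hZ : Z \is (n - 2)%N.-homog)
  (y1 y2 y3 : K * K)
  (h12 : pdistinct y1 y2) (h13 : pdistinct y1 y3) (h23 : pdistinct y2 y3) :
  let W12 := Z * ptform y1 ^+ 2 * ptform y2 ^+ 2 in
  let W13 := Z * ptform y1 ^+ 2 * ptform y3 ^+ 2 in
  let W23 := Z * ptform y2 ^+ 2 * ptform y3 ^+ 2 in
  exists U : 'M[K]_(3, n.+3),
    \rank U = 3%N /\
    (forall z : 'cV[K]_(n.+3),
        (in_span W12 z /\ in_span W13 z /\ in_span W23 z) <-> U *m z = 0) /\
    exists (u1 u2 u3 : 'rV[K]_(n.+1)) (c : K),
      c != 0 /\ psi (linL u1 * linL u2 * linL u3) = c *: minors U.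
Proof.
move=> W12 W13 W23; rewrite /W12 /W13 /W23 {W12 W13 W23}.
set U := Umat n Z y1 y2 y3.
have hWi : forall i : nat, Z * wsel y1 y2 y3 i \is (n.+2).-homog.
  move=> i; have -> : n.+2 = ((n - 2) + 4)%N by lia.
  exact: dhomogM hZ (wsel_homog _ _ _ i).
have nzl1 := pt_neq0 _ _ h12.
have nzl2 := pt_neq0 _ _ h23.
have nzl3 := pt_neq0 _ _ (pdistinct_sym _ _ h13).
have nzW : forall i : nat, Z * wsel y1 y2 y3 i != 0.
  by move=> i; rewrite mulf_neq0 //; case: i => [|[|i]] /=; rewrite mulf_neq0 // expf_neq0.
have rowU : forall i : 'I_3, row i U = cfr n.+2 (Z * wsel y1 y2 y3 i).
  by move=> i; apply/rowP => c; rewrite [LHS]mxE [RHS]mxE /U Urow.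
exists U; split; [|split].
- have key : forall v : 'rV[K]_3, v *m U = 0 -> v = 0.
    move=> v hv; set S := \sum_(i < 3) v 0 i *: wsel y1 y2 y3 i.
    have hZS : Z * S \is (n.+2).-homog.
      rewrite /S mulr_sumr; apply: rpred_sum => i _; rewrite -scalerAr; apply: rpredZ.
      exact: hWi.
    have hS : Z * S = 0.
      rewrite (homog_expand _ _ hZS) big1 // => c _.
      have -> : (Z * S)@_(mono n.+2 c) = 0.
        transitivity ((v *m U) 0 c); last by rewrite hv mxE.
        rewrite mxE /S mulr_sumr raddf_sum /=; apply: eq_bigr => j _.
        by rewrite -scalerAr mcoeffZ Urow.
      by rewrite scale0r.
    have S0 : S = 0 by move/eqP: hS; rewrite mulf_eq0 (negbTE hZ0) => /eqP.
    apply/rowP => i; rewrite mxE; exact: (indep _ _ _ h12 h13 h23 (fun i => v 0 i) S0 i).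
  have hk : kermx U = 0.
    apply/row_matrixP => i; rewrite row0; apply: key.
    by rewrite -row_mul mulmx_ker row0.
  have := mxrank_ker U; rewrite hk mxrank0 => /esym/eqP; rewrite subn_eq0 => h.
  by apply/eqP; rewrite eqn_leq rank_leq_row /=.
- move=> z.
  have E : forall k : nat, (k < 3)%N ->
      in_span (Z * wsel y1 y2 y3 k) z <-> row (inord k) U *m z = 0.
    by move=> k hk; rewrite rowU inordK //; apply: (in_span_iff _ _ _ (nzW k) (hWi k)).
  have E0 := E 0%N isT; have E1 := E 1%N isT; have E2 := E 2%N isT.
  rewrite /= in E0 E1 E2.
  rewrite -(mulrA Z (ptform y1 ^+ 2)) -(mulrA Z (ptform y1 ^+ 2)) -(mulrA Z (ptform y2 ^+ 2)) E0 E1 E2; split.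
    move=> [h0 [h1 h2]]; apply/row_matrixP => i; rewrite row0 row_mul.
    have -> : i = inord (val i) by rewrite inord_val.
    by case: i => [[|[|[|//]]] ?].
  by move=> H; rewrite -!row_mul H !row0.
- set u1 := Pf y1 y2 y3 *: cfr n (Z * (ptform y2 * ptform y3)).
  set u2 := cfr n (Z * (ptform y1 * ptform y3)).
  set u3 := cfr n (Z * (ptform y1 * ptform y2)).
  have h6 : (6%:R : K) != 0 by move/pcharf0P: hK => ->.
  exists u1, u2, u3, (6%:R)^-1; split; first by rewrite invr_eq0.
  suff H6 : psi (linL u1 * linL u2 * linL u3) *+ 6 = minors U.
    by rewrite -H6 -scaler_nat scalerA mulVf ?scale1r.
  rewrite (polar_psi2 _ _ hpsi).
  exact: final_id.
Qed.
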